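(* Let $n\ge2$ and let $\mathbf{Z}^*$, $\mathbf{m}$, $\mathbf{S}$, $\mathbf{D}$ be as in the context. Then the partial maxima BLUE of $\theta_2$ has the form \[ L_2=\frac{\mathbf{m}'\mathbf{S}^{-1}\mathbf{Z}^*}{\mathbf{m}'\mathbf{S}^{-1}\mathbf{m}},\qquad\text{with}\qquad \operatorname{Var}[L_2]=\frac{\theta_2^2}{\mathbf{m}'\mathbf{S}^{-1}\mathbf{m}}, \] and the partial maxima BLIE of $\theta_2$ has the form \[ T_2=\mathbf{m}'\mathbf{D}^{-1}\mathbf{Z}^*,\qquad\text{with}\qquad \mathrm{MSE}[T_2]=(1-\mathbf{m}'\mathbf{D}^{-1}\mathbf{m})\theta_2^2. \]
   Context: $F$ is a known, parameter-free, non-degenerate distribution function on $\mathbb{R}$ with finite variance. For unknown $\theta_1\in\mathbb{R}$, $\theta_2>0$, $X_1^*,\dots,X_n^*$ are i.i.d. with distribution function $F((x-\theta_1)/\theta_2)$ and $X^*_{j:j}=\max\{X_1^*,\dots,X_j^*\}$; $X_1,\dots,X_n$ are i.i.d. from $F$ and $X_{j:j}=\max\{X_1,\dots,X_j\}$. Partial maxima spacings: $Z_i^*=X^*_{i+1:i+1}-X^*_{i:i}$, $Z_i=X_{i+1:i+1}-X_{i:i}$, $i=1,\dots,n-1$; $\mathbf{Z}^*=(Z_1^*,\dots,Z^*_{n-1})'$, $\mathbf{Z}=(Z_1,\dots,Z_{n-1})'$, $\mathbf{m}=\mathbb{E}[\mathbf{Z}]$, $\mathbf{S}$ the covariance matrix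 of $\mathbf{Z}$, $\mathbf{D}=\mathbb{E}[\mathbf{Z}\mathbf{Z}']$ (both positive definite). Linear estimators are $\sum_i c_iX^*_{i:i}$ with constant $c_i$. The BLUE of $\theta_2$ is the linear estimator unbiased for $\theta_2$ for all $(\theta_1,\theta_2)$ with minimum variance. A linear statistic $L=\mathbf{c}'\mathbf{X}^*$ is invariant for $\theta_2$ if $L(b\mathbf{X}^*+a\mathbf{1})=bL(\mathbf{X}^* )$ for all $a\in\mathbb{R}$, $b>0$; the BLIE of $\theta_2$ minimizes $\mathbb{E}[L-\theta_2]^2$ among such statistics. *)

(* Defs.v *)
From HB Require Import structures.
From mathcomp Require Import all_boot all_order all_algebra.
From mathcomp Require Import all_classical all_reals all_analysis.
Set Implicit Arguments. Unset Strict Implicit. Unset Printing Implicit Defensive.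
Import Order.TTheory GRing.Theory Num.Theory.
Local Open Scope classical_set_scope.
Local Open Scope ring_scope.

Section PM.
Context {d : measure_display} {T : measurableType d} {R : realType}.
Variable P : probability T R.

Definition Ex (f : T -> R) : R := fine (\int[P]_t (f t)%:E).
Definition Var (f : T -> R) : R := Ex (fun t => (f t - Ex f) ^+ 2).

Definition mutually_independent n (X : 'I_n -> T -> R) : Prop :=
  forall B : 'I_n -> set R, (forall i, measurable (B i)) ->
    P (\bigcap_(i : 'I_n) (X i @^-1` B i)) = (\prod_(i < n) P (X i @^-1` B i))%E.

Definition iid_sample_from n (F : R -> R) (X : 'I_n -> T -> R) : Prop :=
  [/\ (forall i, measurable_fun setT (X i)),
      mutually_independent X,
      (forall i x, P (X i @^-1` `]-oo, x]) = (F x)%:E) &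
      (forall i, P.-integrable setT (fun t => ((X i t) ^+ 2)%:E))].

Definition nondegenerate_df (F : R -> R) : Prop := exists x, 0 < F x < 1.
End PM.

(* partial maximum X_{j+1:j+1} = max{X_1,...,X_{j+1}} (0-based index j) *)
Definition pmax {T : Type} {R : realType} n (X : 'I_n.+1 -> T -> R) (j : nat) (t : T) : R :=
  \big[Num.max/X ord0 t]_(i < n.+1 | (i <= j)%N) X i t.

(* partial maxima spacings Z_{i+1} = X_{i+2:i+2} - X_{i+1:i+1}, i < n *)
Definition spacings {T : Type} {R : realType} n (X : 'I_n.+1 -> T -> R) (t : T) : 'cV[R]_n :=
  \col_(i < n) (pmax X i.+1 t - pmax X i t).

Definition locscale {T : Type} {R : realType} n (th1 th2 : R) (X : 'I_n -> T -> R) : 'I_n -> T -> R :=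
  fun i t => th1 + th2 * X i t.

Definition linest {T : Type} {R : realType} n (c : 'I_n.+1 -> R) (X : 'I_n.+1 -> T -> R) (t : T) : R :=
  \sum_(i < n.+1) c i * pmax X i t.

Section Est.
Context {d : measure_display} {T : measurableType d} {R : realType}.
Variables (P : probability T R) (n : nat) (X : 'I_n.+1 -> T -> R).

Definition Xstar th1 th2 := locscale th1 th2 X.

Definition unbiased_theta2 (c : 'I_n.+1 -> R) : Prop :=
  forall th1 th2 : R, 0 < th2 -> Ex P (linest c (Xstar th1 th2)) = th2.

Definition is_BLUE_theta2 (c : 'I_n.+1 -> R) : Prop :=
  unbiased_theta2 c /\
  forall c', unbiased_theta2 c' -> forall th1 th2 : R, 0 < th2 ->
    Var P (linest c (Xstar th1 th2)) <= Var P (linest c' (Xstar th1 th2)).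

Definition invariant_theta2 (c : 'I_n.+1 -> R) : Prop :=
  forall (x : 'I_n.+1 -> R) (a b : R), 0 < b ->
    \sum_(i < n.+1) c i * (b * x i + a) = b * \sum_(i < n.+1) c i * x i.

Definition MSE_theta2 (c : 'I_n.+1 -> R) th1 th2 : R :=
  Ex P (fun t => (linest c (Xstar th1 th2) t - th2) ^+ 2).

Definition is_BLIE_theta2 (c : 'I_n.+1 -> R) : Prop :=
  invariant_theta2 c /\
  forall c', invariant_theta2 c' -> forall th1 th2 : R, 0 < th2 ->
    MSE_theta2 c th1 th2 <= MSE_theta2 c' th1 th2.
End Est.

Definition mvec {d} {T : measurableType d} {R : realType} (P : probability T R) n
  (X : 'I_n.+1 -> T -> R) : 'cV[R]_n :=
  \col_i Ex P (fun t => spacings X t i ord0).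
Definition Smat {d} {T : measurableType d} {R : realType} (P : probability T R) n
  (X : 'I_n.+1 -> T -> R) : 'M[R]_n :=
  \matrix_(i, j) Ex P (fun t => (spacings X t i ord0 - mvec P X i ord0) *
                                (spacings X t j ord0 - mvec P X j ord0)).
Definition Dmat {d} {T : measurableType d} {R : realType} (P : probability T R) n
  (X : 'I_n.+1 -> T -> R) : 'M[R]_n :=
  \matrix_(i, j) Ex P (fun t => spacings X t i ord0 * spacings X t j ord0).

Definition posdef {R : realType} n (A : 'M[R]_n) : Prop :=
  forall v : 'cV[R]_n, v != 0 -> 0 < (v^T *m A *m v) ord0 ord0.

Definition qf {R : realType} n (u : 'cV[R]_n) (A : 'M[R]_n) (v : 'cV[R]_n) : R :=
  (u^T *m A *m v) ord0 ord0.

(* Main.v *)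
Require Import Defs.
From HB Require Import structures.
From mathcomp Require Import all_boot all_order all_algebra.
From mathcomp Require Import all_classical all_reals all_analysis.
From mathcomp Require Import ring lra.
Import Order.TTheory GRing.Theory Num.Theory.
Local Open Scope classical_set_scope.
Local Open Scope ring_scope.

Section ExLemmas.
Context {d : measure_display} {T : measurableType d} {R : realType}.
Variable P : probability T R.

Definition intg (f : T -> R) := P.-integrable setT (EFin \o f).

Lemma intg_fin f : intg f -> ((\int[P]_t (f t)%:E)%E \is a fin_num).
Proof. by move=> h; exact: integrable_fin_num. Qed.

Lemma Ex_add f g : intg f -> intg g -> Ex P (fun t => f t + g t) = Ex P f + Ex P g.
Proof.
move=> hf hg; rewrite /Ex.
under eq_integral do rewrite EFinD.
rewrite integralD // fineD // ?intg_fin //.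
Qed.

Lemma Ex_scale a f : intg f -> Ex P (fun t => a * f t) = a * Ex P f.
Proof.
move=> hf; rewrite /Ex.
under eq_integral do rewrite EFinM.
by rewrite integralZl // fineM // intg_fin.
Qed.

Lemma Ex_cst a : Ex P (fun _ => a) = a.
Proof.
rewrite /Ex integral_cst //; transitivity (fine (a%:E * 1)%E); last by rewrite mule1.
by congr (fine (_ * _)%E); exact: probability_setT.
Qed.

Lemma intg_add f g : intg f -> intg g -> intg (fun t => f t + g t).
Proof.
move=> hf hg; rewrite /intg.
have -> : (EFin \o (fun t => f t + g t)) = (EFin \o f) \+ (EFin \o g).
  by apply/funext => t /=; rewrite EFinD.
exact: integrableD.
Qed.

Lemma intg_scale a f : intg f -> intg (fun t => a * f t).
Proof.
move=> hf; rewrite /intg.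
have -> : (EFin \o (fun t => a * f t)) = (fun t => a%:E * (EFin \o f) t)%E.
  by apply/funext => t /=; rewrite EFinM.
exact: integrableZl.
Qed.

Lemma intg_cst a : intg (fun _ => a).
Proof. exact: finite_measure_integrable_cst. Qed.

Lemma intg_sum (I : eqType) (s : seq I) (f : I -> T -> R) :
  (forall i, intg (f i)) -> intg (fun t => \sum_(i <- s) f i t).
Proof.
move=> h; elim: s => [|i s IH].
  by under eq_fun do rewrite big_nil; exact: intg_cst.
under eq_fun do rewrite big_cons; exact: intg_add.
Qed.

Lemma Ex_sum (I : eqType) (s : seq I) (f : I -> T -> R) :
  (forall i, intg (f i)) -> Ex P (fun t => \sum_(i <- s) f i t) = \sum_(i <- s) Ex P (f i).
Proof.
move=> h; elim: s => [|i s IH].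
  by under eq_fun do rewrite big_nil; rewrite big_nil Ex_cst.
under eq_fun do rewrite big_cons; rewrite big_cons Ex_add ?IH //; exact: intg_sum.
Qed.

End ExLemmas.

Section LinAlg.
Context {R : realType} {n : nat}.
Implicit Types (A : 'M[R]_n) (w v : 'rV[R]_n) (m : 'cV[R]_n).

Definition qrow A w : R := (w *m A *m w^T) 0 0.

Lemma posdef_row {A w} : posdef A -> w != 0 -> 0 < qrow A w.
Proof.
move=> hA hw; have := hA w^T; rewrite trmxK; apply.
by apply: contra hw => /eqP h; rewrite -[w]trmxK h linear0.
Qed.

Lemma posdef_unit {A} : posdef A -> A \in unitmx.
Proof.
move=> hA; rewrite unitmxE unitfE -det_tr; apply/negP => /det0P [v hv hvA].
have := posdef_row hA hv; rewrite /qrow -mulmxA.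
have -> : A *m v^T = 0 by rewrite -[A]trmxK -trmx_mul hvA linear0.
by rewrite mulmx0 mxE ltxx.
Qed.

Lemma tr11 (M : 'M[R]_1) : M^T 0 0 = M 0 0.
Proof. by rewrite mxE. Qed.

Lemma qrow_shift A m w s : A^T = A -> A \in unitmx ->
  qrow A (w - s *: (m^T *m invmx A)) =
  qrow A w - 2 * s * (w *m m) 0 0 + s ^+ 2 * (m^T *m invmx A *m m) 0 0.
Proof.
move=> hs hu; set v := m^T *m invmx A.
have hvT : v^T = invmx A *m m by rewrite /v trmx_mul trmxK trmx_inv hs.
have e1 : w *m A *m v^T = w *m m by rewrite hvT mulmxA -(mulmxA w) mulmxV // mulmx1.
have e2 : v *m A *m w^T = (w *m m)^T.
  by rewrite /v -(mulmxA _ _ A) mulVmx // mulmx1 trmx_mul.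
have e3 : v *m A *m v^T = m^T *m invmx A *m m.
  by rewrite /v -(mulmxA _ _ A) mulVmx // mulmx1 hvT mulmxA.
rewrite /qrow. have -> : (w - s *: v) *m A *m (w - s *: v)^T = w *m A *m w^T - s *: (w *m A *m v^T)
    - s *: (v *m A *m w^T) + s^+2 *: (v *m A *m v^T).
  rewrite mulmxBl mulmxBl [(w - _)^T]linearB /= [(s *: v)^T]linearZ /= !mulmxBr.
  rewrite -!scalemxAl !scalemxAr scalerA -expr2.
  by rewrite opprB addrA addrAC.
rewrite e1 e2 e3 !mxE.
ring.
Qed.

Lemma qrow_inv A m : A^T = A -> A \in unitmx ->
  qrow A (m^T *m invmx A) = (m^T *m invmx A *m m) 0 0.
Proof.
move=> hs hu; rewrite /qrow trmx_mul trmxK trmx_inv hs -(mulmxA _ _ A) mulVmx // mulmx1.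
by rewrite mulmxA.
Qed.

Lemma q_pos A m : posdef A -> A^T = A -> m != 0 -> 0 < (m^T *m invmx A *m m) 0 0.
Proof.
move=> hA hs hm; have hu := posdef_unit hA.
rewrite -qrow_inv //; apply: posdef_row => //.
apply: contra hm => /eqP h.
have : m^T *m invmx A *m A = 0 by rewrite h mul0mx.
by rewrite -mulmxA mulVmx // mulmx1 => h2; rewrite -[m]trmxK h2 linear0.
Qed.

Lemma qrow0 A w : posdef A -> qrow A w <= 0 -> w = 0.
Proof.
move=> hA h; apply/eqP; apply: contraLR h => hw; rewrite -ltNge.
exact: posdef_row.
Qed.

Lemma qrow_ge0 A w : posdef A -> 0 <= qrow A w.
Proof.
move=> hA; have [->|hw] := eqVneq w 0; last exact/ltW/posdef_row.
by rewrite /qrow mul0mx mul0mx mxE.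
Qed.

End LinAlg.

Section BigMax.
Context {R : realType}.

Lemma bigmax_seq_ub (I : eqType) (s : seq I) (Pp : pred I) (F : I -> R) (x0 : R) :
  x0 <= \big[Num.max/x0]_(i <- s | Pp i) F i /\
  forall i, i \in s -> Pp i -> F i <= \big[Num.max/x0]_(i <- s | Pp i) F i.
Proof.
elim: s => [|a s [IH1 IH2]]; first by rewrite big_nil; split.
rewrite big_cons; case: ifP => Pa.
  split; first by rewrite le_max IH1 orbT.
  move=> i; rewrite inE => /orP[/eqP ->|ins] Pi; first by rewrite le_max lexx.
  by rewrite le_max IH2 ?orbT.
split => // i; rewrite inE => /orP[/eqP ->|ins] Pi; first by rewrite Pa in Pi.
exact: IH2.
Qed.

Lemma bigmax_seq_case (I : eqType) (s : seq I) (Pp : pred I) (F : I -> R) (x0 : R) :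
  \big[Num.max/x0]_(i <- s | Pp i) F i = x0 \/
  exists i, [/\ i \in s, Pp i & \big[Num.max/x0]_(i <- s | Pp i) F i = F i].
Proof.
elim: s => [|a s IH]; first by rewrite big_nil; left.
rewrite big_cons; case: ifP => Pa; last first.
  case: IH => [->|[i [ins Pi ->]]]; [by left|right; exists i; by rewrite inE ins orbT].
rewrite /Num.max /Order.max; case: ifP => _.
  case: IH => [->|[i [ins Pi ->]]]; [by left|right; exists i; by rewrite inE ins orbT].
by right; exists a; rewrite inE eqxx.
Qed.

Lemma max_affine (a b x y : R) : 0 < b ->
  a + b * Num.max x y = Num.max (a + b * x) (a + b * y).
Proof.
move=> hb; rewrite /Num.max /Order.max ltrD2l ltr_pM2l //; by case: ifP.
Qed.

End BigMax.

Section Pmax.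
Context {T : Type} {R : realType} {n : nat}.
Variable X : 'I_n.+1 -> T -> R.

Lemma pmax_case j t : exists i : 'I_n.+1, (i <= j)%N /\ pmax X j t = X i t.
Proof.
rewrite /pmax; case: (bigmax_seq_case _ (index_enum 'I_n.+1) (fun i : 'I_n.+1 => (i <= j)%N) (fun i => X i t) (X ord0 t)) => [->|[i [_ Pi ->]]].
  by exists ord0.
by exists i.
Qed.

Lemma pmax_ub j t (i : 'I_n.+1) : (i <= j)%N -> X i t <= pmax X j t.
Proof.
move=> hij; have [_ h] := bigmax_seq_ub _ (index_enum 'I_n.+1) (fun i : 'I_n.+1 => (i <= j)%N) (fun i => X i t) (X ord0 t).
exact: h (mem_index_enum _) hij.
Qed.

Lemma pmax_mono j t : pmax X j t <= pmax X j.+1 t.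
Proof.
have [i [hi ->]] := pmax_case j t; apply: pmax_ub; exact: leqW.
Qed.

Lemma pmax_star th1 th2 j t : 0 < th2 ->
  pmax (locscale th1 th2 X) j t = th1 + th2 * pmax X j t.
Proof.
move=> h2; rewrite /pmax (big_morph (fun v => th1 + th2 * v) (id1 := th1 + th2 * X ord0 t)
  (op1 := Num.max) (fun x y => max_affine th1 th2 x y h2) erefl).
by [].
Qed.

End Pmax.

Section Comb.
Context {R : comRingType} {n : nat}.

Definition Wf (w : 'rV[R]_n) (j : nat) : R :=
  if @insub nat (fun k => (k < n)%N) 'I_n j is Some k then w 0 k else 0.

Lemma Wf_ord w (k : 'I_n) : Wf w k = w 0 k.
Proof. by rewrite /Wf valK. Qed.

Lemma Wf_ge w j : (n <= j)%N -> Wf w j = 0.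
Proof. by move=> h; rewrite /Wf insubF // ltnNge h. Qed.

Definition fromb (w : 'rV[R]_n) (i : 'I_n.+1) : R :=
  (if (0 < i)%N then Wf w i.-1 else 0) - Wf w i.

Lemma fromb_lin w (p : nat -> R) :
  \sum_(i < n.+1) fromb w i * p i = \sum_(j < n) w 0 j * (p j.+1 - p j).
Proof.
have -> : \sum_(i < n.+1) fromb w i * p i =
   \sum_(0 <= i < n.+1) ((if (0 < i)%N then Wf w i.-1 else 0) - Wf w i) * p i.
  by rewrite big_mkord.
have -> : \sum_(j < n) w 0 j * (p j.+1 - p j) = \sum_(0 <= j < n) Wf w j * (p j.+1 - p j).
  by rewrite big_mkord; apply: eq_bigr => j _; rewrite Wf_ord.
under eq_bigr do rewrite mulrBl.
rewrite sumrB big_nat_recl // big_nat_recr //= Wf_ge // mul0r mul0r add0r addr0.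
under [X in _ = X]eq_bigr do rewrite mulrBr.
by rewrite sumrB.
Qed.

Definition tb (c : 'I_n.+1 -> R) : 'rV[R]_n := \row_(j < n) \sum_(i < n.+1 | (j < i)%N) c i.

Lemma tele (p : nat -> R) (i : 'I_n.+1) :
  p i = p 0%N + \sum_(j < n | (j < i)%N) (p j.+1 - p j).
Proof.
have hin : (i <= n)%N by rewrite -ltnS.
rewrite -(big_mkord (fun j => (j < i)%N) (fun j => p j.+1 - p j)).
have := big_nat_widen 0 i n xpredT (fun j => p j.+1 - p j) hin.
rewrite /= => <-.
by rewrite telescope_sumr // addrC subrK.
Qed.

Lemma abel (c : 'I_n.+1 -> R) (p : nat -> R) :
  \sum_(i < n.+1) c i * p i =
  (\sum_(i < n.+1) c i) * p 0%N + \sum_(j < n) tb c 0 j * (p j.+1 - p j).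
Proof.
under eq_bigr do rewrite (tele p) mulrDr.
rewrite big_split /= mulr_suml; congr (_ + _).
under eq_bigr do rewrite mulr_sumr big_mkcond.
rewrite exchange_big /=; apply: eq_big => // j _.
rewrite mxE mulr_suml [RHS]big_mkcond; apply: eq_bigr => i _.
by case: ifP => _; rewrite ?mul0r.
Qed.

End Comb.

Section MeasMax.
Context {d : measure_display} {T : measurableType d} {R : realType}.

Lemma meas_bigmax (I : eqType) (s : seq I) (Pp : pred I) (F : I -> T -> R) (x0 : T -> R) :
  measurable_fun setT x0 -> (forall i, measurable_fun setT (F i)) ->
  measurable_fun setT (fun t => \big[Num.max/x0 t]_(i <- s | Pp i) F i t).
Proof.
move=> m0 mF; elim: s => [|a s IH].
  by under eq_fun do rewrite big_nil.
case: (boolP (Pp a)) => Pa.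
  have -> : (fun t => \big[Num.max/x0 t]_(i <- a :: s | Pp i) F i t) =
    (fun t => Num.max (F a t) (\big[Num.max/x0 t]_(i <- s | Pp i) F i t)).
    by apply/funext => t; rewrite big_cons Pa.
  exact: measurable_realfun.measurable_maxr.
have -> : (fun t => \big[Num.max/x0 t]_(i <- a :: s | Pp i) F i t) =
    (fun t => \big[Num.max/x0 t]_(i <- s | Pp i) F i t).
  by apply/funext => t; rewrite big_cons (negbTE Pa).
exact: IH.
Qed.

End MeasMax.

Section Main.
Context {d : measure_display} {T : measurableType d} {R : realType}.
Variable P : probability T R.
Variable n : nat.
Variable X : 'I_n.+1 -> T -> R.
Hypothesis mX : forall i, measurable_fun setT (X i).
Hypothesis iX : forall i, P.-integrable setT (fun t => ((X i t) ^+ 2)%:E).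

Definition G (t : T) : R := 1 + \sum_i X i t ^+ 2.

Lemma G_ge0 t : 0 <= G t.
Proof. by rewrite /G addr_ge0 // sumr_ge0 // => i _; exact: sqr_ge0. Qed.

Lemma intg_G : intg P G.
Proof. apply: intg_add; first exact: intg_cst. apply: intg_sum => i; exact: iX. Qed.

Lemma sq_le_G i t : X i t ^+ 2 <= G t.
Proof.
rewrite /G (bigD1 i) //= addrCA lerDl addr_ge0 // sumr_ge0 // => k _; exact: sqr_ge0.
Qed.

Lemma intg_dom (f : T -> R) : measurable_fun setT f -> (forall t, `|f t| <= G t) -> intg P f.
Proof.
move=> mf hf; apply: (le_integrable measurableT _ _ intg_G).
  exact/measurable_realfun.measurable_EFinP.
by move=> t _ /=; rewrite lee_fin (ger0_norm (G_ge0 t)).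
Qed.

Lemma meas_pmax j : measurable_fun setT (pmax X j).
Proof. exact: meas_bigmax. Qed.

Lemma sq1_le_G i t : 1 + X i t ^+ 2 <= G t.
Proof.
rewrite /G (bigD1 i) //= addrA lerDl sumr_ge0 // => k _; exact: sqr_ge0.
Qed.

Lemma norm_le_sq (x : R) : `|x| <= 1 + x ^+ 2.
Proof.
have h1 : 0 <= `|x| by [].
have h2 : `|x| ^+ 2 = x ^+ 2 by rewrite real_normK // num_real.
nra.
Qed.

Lemma intg_pm j : intg P (pmax X j).
Proof.
apply: intg_dom; first exact: meas_pmax.
move=> t; have [i [_ ->]] := pmax_case X j t.
exact: le_trans (norm_le_sq _) (sq1_le_G i t).
Qed.

Lemma intg_pp j k : intg P (fun t => pmax X j t * pmax X k t).
Proof.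
apply: intg_dom; first by apply: measurable_realfun.measurable_funM; exact: meas_pmax.
move=> t; have [a [_ ->]] := pmax_case X j t; have [b [_ ->]] := pmax_case X k t.
have ha := sq_le_G a t; have hb := sq_le_G b t.
have h1 : 0 <= `|X a t| by []. have h2 : 0 <= `|X b t| by [].
have h3 : `|X a t| ^+ 2 = X a t ^+ 2 by rewrite real_normK // num_real.
have h4 : `|X b t| ^+ 2 = X b t ^+ 2 by rewrite real_normK // num_real.
rewrite normrM; nra.
Qed.


Lemma intg_sub (f g : T -> R) : intg P f -> intg P g -> intg P (fun t => f t - g t).
Proof.
move=> hf hg; have -> : (fun t => f t - g t) = (fun t => f t + (-1) * g t).
  by apply/funext => t; rewrite mulN1r.
by apply: intg_add => //; exact: intg_scale.
Qed.

Lemma Ex_sub (f g : T -> R) : intg P f -> intg P g -> Ex P (fun t => f t - g t) = Ex P f - Ex P g.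
Proof.
move=> hf hg; have -> : (fun t => f t - g t) = (fun t => f t + (-1) * g t).
  by apply/funext => t; rewrite mulN1r.
by rewrite Ex_add ?Ex_scale ?mulN1r //; exact: intg_scale.
Qed.

Definition Zf (j : nat) (t : T) : R := pmax X j.+1 t - pmax X j t.

Lemma intg_Z j : intg P (Zf j).
Proof. by apply: intg_sub; apply: intg_pm. Qed.

Lemma intg_ZZ j k : intg P (fun t => Zf j t * Zf k t).
Proof.
have -> : (fun t => Zf j t * Zf k t) = (fun t =>
   (pmax X j.+1 t * pmax X k.+1 t + pmax X j t * pmax X k t) -
   (pmax X j.+1 t * pmax X k t + pmax X j t * pmax X k.+1 t)).
  by apply/funext => t; rewrite /Zf; ring.
by apply: intg_sub; apply: intg_add; apply: intg_pp.
Qed.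

Local Notation m := (mvec P X).
Local Notation Dm := (Dmat P X).
Local Notation Sm := (Smat P X).

Lemma mE (j : 'I_n) : m j 0 = Ex P (Zf j).
Proof. by rewrite mxE; congr Ex; apply/funext => t; rewrite mxE. Qed.

Lemma DE (j k : 'I_n) : Dm j k = Ex P (fun t => Zf j t * Zf k t).
Proof. by rewrite mxE; congr Ex; apply/funext => t; rewrite !mxE. Qed.

Lemma SE (j k : 'I_n) : Sm j k = Dm j k - m j 0 * m k 0.
Proof.
rewrite DE mxE.
have -> : (fun t => (spacings X t j 0 - m j 0) * (spacings X t k 0 - m k 0)) =
  (fun t => (Zf j t * Zf k t + (- m k 0) * Zf j t) + ((- m j 0) * Zf k t + m j 0 * m k 0)).
  by apply/funext => t; rewrite !mxE /Zf; ring.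
rewrite Ex_add; last 2 first.
- by apply: intg_add; [exact: intg_ZZ| apply: intg_scale; exact: intg_Z].
- by apply: intg_add; [apply: intg_scale; exact: intg_Z | exact: intg_cst].
rewrite Ex_add; [|exact: intg_ZZ| apply: intg_scale; exact: intg_Z].
rewrite Ex_add; [|apply: intg_scale; exact: intg_Z | exact: intg_cst].
rewrite !Ex_scale ?Ex_cst; try exact: intg_Z; try exact: intg_cst.
rewrite -!mE; ring.
Qed.

Lemma S_sym : Sm^T = Sm.
Proof.
apply/matrixP => i j; rewrite !mxE; congr Ex; apply/funext => t; exact: mulrC.
Qed.

Lemma D_sym : Dm^T = Dm.
Proof.
apply/matrixP => i j; rewrite !mxE; congr Ex; apply/funext => t; exact: mulrC.
Qed.

Definition zs (w : 'rV[R]_n) (t : T) : R := \sum_(j < n) w 0 j * Zf j t.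

Lemma intg_zs w : intg P (zs w).
Proof. apply: intg_sum => j; apply: intg_scale; exact: intg_Z. Qed.

Lemma Ex_zs w : Ex P (zs w) = (w *m m) 0 0.
Proof.
rewrite /zs Ex_sum; last by move=> j; apply: intg_scale; exact: intg_Z.
rewrite mxE; apply: eq_bigr => j _; rewrite Ex_scale ?mE //; exact: intg_Z.
Qed.

Lemma qrowE (M : 'M[R]_n) w : qrow M w = \sum_(k < n) \sum_(j < n) w 0 j * w 0 k * M j k.
Proof.
rewrite /qrow mxE; apply: eq_bigr => k _; rewrite mxE mulr_suml; apply: eq_bigr => j _.
by rewrite !mxE; ring.
Qed.

Lemma zs_sq w t : zs w t ^+ 2 = \sum_(k < n) \sum_(j < n) (w 0 j * w 0 k) * (Zf j t * Zf k t).
Proof.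
rewrite expr2 {2}/zs mulr_sumr; apply: eq_bigr => k _.
rewrite /zs mulr_suml; apply: eq_bigr => j _; ring.
Qed.

Lemma intg_zs_sq w : intg P (fun t => zs w t ^+ 2).
Proof.
under eq_fun do rewrite zs_sq.
apply: intg_sum => k; apply: intg_sum => j; apply: intg_scale; exact: intg_ZZ.
Qed.

Lemma Ex_zs_sq w : Ex P (fun t => zs w t ^+ 2) = qrow Dm w.
Proof.
under eq_fun do rewrite zs_sq.
rewrite qrowE Ex_sum; last first.
  move=> k; apply: intg_sum => j; apply: intg_scale; exact: intg_ZZ.
apply: eq_bigr => k _; rewrite Ex_sum; last by move=> j; apply: intg_scale; exact: intg_ZZ.
apply: eq_bigr => j _; rewrite Ex_scale ?DE //; exact: intg_ZZ.
Qed.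

Lemma Ex_sq a w : Ex P (fun t => (a + zs w t) ^+ 2) = a ^+ 2 + 2 * a * (w *m m) 0 0 + qrow Dm w.
Proof.
have -> : (fun t => (a + zs w t) ^+ 2) = (fun t => (a ^+ 2 + (2 * a) * zs w t) + zs w t ^+ 2).
  by apply/funext => t; ring.
rewrite Ex_add; last 2 first.
- apply: intg_add; [exact: intg_cst| apply: intg_scale; exact: intg_zs].
- exact: intg_zs_sq.
rewrite Ex_add; [|exact: intg_cst| apply: intg_scale; exact: intg_zs].
by rewrite Ex_cst Ex_scale ?Ex_zs ?Ex_zs_sq //; exact: intg_zs.
Qed.

Lemma zsZ s w t : zs (s *: w) t = s * zs w t.
Proof. rewrite /zs mulr_sumr; apply: eq_bigr => j _; rewrite mxE; ring. Qed.

Lemma qrowZ (M : 'M[R]_n) s w : qrow M (s *: w) = s ^+ 2 * qrow M w.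
Proof. by rewrite /qrow linearZ /= -!scalemxAl -scalemxAr scalerA !mxE expr2. Qed.

Lemma qrowS w : qrow Sm w = qrow Dm w - ((w *m m) 0 0) ^+ 2.
Proof.
have ha : (w *m m) 0 0 = \sum_j w 0 j * m j 0 by rewrite mxE.
rewrite !qrowE expr2 {1}ha mulr_suml -sumrB; apply: eq_bigr => k _.
rewrite ha mulr_sumr -sumrB; apply: eq_bigr => j _; rewrite SE; ring.
Qed.

Lemma scal00 (M : 'M[R]_1) s : (s *: M) 0 0 = s * M 0 0.
Proof. by rewrite mxE. Qed.

Lemma Var_zs th2 w : Var P (fun t => th2 * zs w t) = th2 ^+ 2 * qrow Sm w.
Proof.
rewrite /Var Ex_scale ?Ex_zs; last exact: intg_zs.
have -> : (fun t => (th2 * zs w t - th2 * (w *m m) 0 0) ^+ 2) =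
    (fun t => (- (th2 * (w *m m) 0 0) + zs (th2 *: w) t) ^+ 2).
  by apply/funext => t; rewrite zsZ; ring.
rewrite Ex_sq qrowZ qrowS -scalemxAl scal00; ring.
Qed.

Lemma MSE_zs th2 w : Ex P (fun t => (th2 * zs w t - th2) ^+ 2) =
  th2 ^+ 2 * (qrow Dm w - 2 * (w *m m) 0 0 + 1).
Proof.
have -> : (fun t => (th2 * zs w t - th2) ^+ 2) = (fun t => (- th2 + zs (th2 *: w) t) ^+ 2).
  by apply/funext => t; rewrite zsZ; ring.
rewrite Ex_sq qrowZ -scalemxAl scal00; ring.
Qed.

Lemma meas_Z j : measurable_fun setT (Zf j).
Proof. by apply: measurable_realfun.measurable_funB; apply: meas_pmax. Qed.

Lemma Z_ge0 j t : 0 <= Zf j t.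
Proof. by rewrite /Zf subr_ge0 pmax_mono. Qed.

Lemma ExZ0_sq j : Ex P (Zf j) = 0 -> Ex P (fun t => Zf j t * Zf j t) = 0.
Proof.
move=> h0.
have hi : (\int[P]_t (Zf j t)%:E)%E = 0%E.
  have hf := intg_fin P (Zf j) (intg_Z j); move: h0; rewrite /Ex => h0.
  by rewrite -(fineK hf) h0.
have hae : ae_eq P setT (EFin \o Zf j) (cst 0%E).
  apply/(ae_eq_integral_abs P measurableT); first exact/measurable_realfun.measurable_EFinP/meas_Z.
  rewrite -hi; apply: eq_integral => t _ /=.
  by rewrite ger0_norm // Z_ge0.
rewrite /Ex.
rewrite (ae_eq_integral (cst 0%E)) //.
- by rewrite integral0.
- apply/measurable_realfun.measurable_EFinP.
  by apply: measurable_realfun.measurable_funM; exact: meas_Z.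
- move: hae; apply: filterS => t /= h /h [->]; by rewrite mulr0.
Qed.

Lemma qrow_delta (M : 'M[R]_n) j0 : qrow M (delta_mx 0 j0) = M j0 j0.
Proof.
rewrite qrowE (bigD1 j0) //= (bigD1 j0) //= !mxE !eqxx /= mul1r mul1r.
rewrite big1 ?addr0; last first.
  by move=> j hj; rewrite !mxE !eqxx /= (negbTE hj) mul0r mul0r.
rewrite big1 ?addr0 //.
move=> k hk; apply: big1 => j _; rewrite !mxE !eqxx /= (negbTE hk) /= mulr0 mul0r //.
Qed.

Lemma m_neq0 : (0 < n)%N -> posdef Sm -> m != 0.
Proof.
move=> hn hS; apply/negP => /eqP hm.
pose j0 : 'I_n := Ordinal hn.
pose e : 'rV[R]_n := delta_mx 0 j0.
have he : e != 0.
  apply/negP => /eqP/matrixP/(_ 0 j0); rewrite !mxE !eqxx /=; exact/eqP/oner_neq0.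
have := posdef_row hS he.
have -> : qrow Sm e = Sm j0 j0 by rewrite qrow_delta.
have hm0 : m j0 0 = 0 by rewrite hm mxE.
rewrite SE hm0 mul0r subr0 DE ExZ0_sq ?ltxx //.
by rewrite -mE.
Qed.

Lemma zs_mx w t : zs w t = (w *m spacings X t) 0 0.
Proof. by rewrite /zs mxE; apply: eq_bigr => j _; rewrite mxE. Qed.

Lemma spac_star th1 th2 t : 0 < th2 ->
  spacings (Xstar X th1 th2) t = th2 *: spacings X t.
Proof.
move=> h2; apply/matrixP => i j; rewrite !mxE /Xstar !pmax_star //; ring.
Qed.

Lemma linest_star (c : 'I_n.+1 -> R) th1 th2 t : 0 < th2 ->
  linest c (Xstar X th1 th2) t =
  th1 * \sum_i c i + th2 * \sum_i c i * pmax X i t.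
Proof.
move=> h2; rewrite /linest /Xstar.
under eq_bigr do rewrite pmax_star // mulrDr.
rewrite big_split /= !mulr_sumr; congr (_ + _); apply: eq_bigr => i _; ring.
Qed.

Lemma sum_abel (c : 'I_n.+1 -> R) t :
  \sum_i c i * pmax X i t = (\sum_i c i) * pmax X 0 t + zs (tb c) t.
Proof. by rewrite (abel c (fun j => pmax X j t)). Qed.

Lemma lin_tb (c : 'I_n.+1 -> R) th1 th2 t : 0 < th2 -> \sum_i c i = 0 ->
  linest c (Xstar X th1 th2) t = th2 * zs (tb c) t.
Proof. by move=> h2 hc; rewrite linest_star // sum_abel hc !mul0r mulr0 !add0r. Qed.

Lemma sum_fromb (w : 'rV[R]_n) : \sum_i fromb w i = 0.
Proof.
have := fromb_lin w (fun _ => 1 : R); rewrite /= => h.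
under eq_bigr do rewrite -[fromb w _]mulr1.
by rewrite h big1 // => j _; rewrite subrr mulr0.
Qed.

Lemma tb_fromb_zs (w : 'rV[R]_n) t : zs (tb (fromb w)) t = zs w t.
Proof.
have := sum_abel (fromb w) t; rewrite sum_fromb mul0r add0r => <-.
exact: (fromb_lin w (fun j => pmax X j t)).
Qed.

Lemma lin_fromb (w : 'rV[R]_n) th1 th2 t : 0 < th2 ->
  linest (fromb w) (Xstar X th1 th2) t = th2 * zs w t.
Proof. by move=> h2; rewrite lin_tb ?sum_fromb // tb_fromb_zs. Qed.

Lemma Ex_linest (c : 'I_n.+1 -> R) th1 th2 : 0 < th2 ->
  Ex P (linest c (Xstar X th1 th2)) =
  th1 * \sum_i c i + th2 * ((\sum_i c i) * Ex P (pmax X 0) + (tb c *m m) 0 0).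
Proof.
move=> h2.
have -> : linest c (Xstar X th1 th2) = (fun t => th1 * \sum_i c i +
    th2 * ((\sum_i c i) * pmax X 0 t + zs (tb c) t)).
  by apply/funext => t; rewrite linest_star // sum_abel.
have i1 : intg P (fun t => (\sum_i c i) * pmax X 0 t + zs (tb c) t).
  by apply: intg_add; [apply: intg_scale; exact: intg_pm| exact: intg_zs].
rewrite Ex_add; [|exact: intg_cst| exact: intg_scale].
rewrite Ex_cst Ex_scale // Ex_add; [|apply: intg_scale; exact: intg_pm| exact: intg_zs].
by rewrite Ex_scale ?Ex_zs //; exact: intg_pm.
Qed.

Lemma unbiasedP (c : 'I_n.+1 -> R) :
  unbiased_theta2 P X c -> \sum_i c i = 0 /\ (tb c *m m) 0 0 = 1.
Proof.
move=> hu; have h01 := hu 0 1 ltr01; have h11 := hu 1 1 ltr01.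
rewrite Ex_linest // in h01; rewrite Ex_linest // in h11.
have hs : \sum_i c i = 0.
  move: h01 h11; rewrite !mul1r mul0r add0r => -> h; lra.
split => //; move: h01; by rewrite hs !mul0r !add0r mul1r.
Qed.

Lemma unbiased_of (c : 'I_n.+1 -> R) :
  \sum_i c i = 0 -> (tb c *m m) 0 0 = 1 -> unbiased_theta2 P X c.
Proof. by move=> hs hm th1 th2 h2; rewrite Ex_linest // hs hm !mul0r mulr0 !add0r mulr1. Qed.

Lemma invariantP (c : 'I_n.+1 -> R) : invariant_theta2 c -> \sum_i c i = 0.
Proof.
move=> hi; have := hi (fun _ => 0) 1 1 ltr01.
under eq_bigr do rewrite mulr0 add0r mulr1.
by move=> ->; rewrite mul1r big1 // => i _; rewrite mulr0.
Qed.

Lemma invariant_of (c : 'I_n.+1 -> R) : \sum_i c i = 0 -> invariant_theta2 c.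
Proof.
move=> hs x a b hb.
under eq_bigr do rewrite mulrDr.
by rewrite big_split /= -mulr_suml hs mul0r addr0 mulr_sumr; apply: eq_bigr => i _; ring.
Qed.

Lemma Var_lin (c : 'I_n.+1 -> R) th1 th2 : 0 < th2 -> \sum_i c i = 0 ->
  Var P (linest c (Xstar X th1 th2)) = th2 ^+ 2 * qrow Sm (tb c).
Proof.
move=> h2 hs; rewrite -Var_zs; congr Var; apply/funext => t; exact: lin_tb.
Qed.

Lemma MSE_lin (c : 'I_n.+1 -> R) th1 th2 : 0 < th2 -> \sum_i c i = 0 ->
  MSE_theta2 P X c th1 th2 = th2 ^+ 2 * (qrow Dm (tb c) - 2 * (tb c *m m) 0 0 + 1).
Proof.
move=> h2 hs; rewrite /MSE_theta2 -MSE_zs; congr Ex; apply/funext => t; by rewrite lin_tb.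
Qed.

Lemma null_set (f g : T -> R) : (forall t, f t = g t) -> P [set t | f t != g t] = 0%E.
Proof.
move=> h; have -> : [set t | f t != g t] = set0.
  by apply/seteqP; split => t //=; rewrite h eqxx.
exact: measure0.
Qed.

Lemma main_blue : (0 < n)%N -> posdef Sm ->
  exists c2 : 'I_n.+1 -> R,
     (forall th1 th2 t, 0 < th2 ->
        linest c2 (Xstar X th1 th2) t =
        qf m (invmx Sm) (spacings (Xstar X th1 th2) t) / qf m (invmx Sm) m)
     /\ is_BLUE_theta2 P X c2
     /\ (forall th1 th2, 0 < th2 ->
           Var P (linest c2 (Xstar X th1 th2)) = th2 ^+ 2 / qf m (invmx Sm) m)
     /\ (forall c, is_BLUE_theta2 P X c -> forall th1 th2, 0 < th2 ->
           P [set t | linest c (Xstar X th1 th2) t != linest c2 (Xstar X th1 th2) t]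
           = 0%E).
Proof.
move=> hn hS.
have hsym := S_sym; have hu := posdef_unit hS; have hm := m_neq0 hn hS.
rewrite /qf.
set v := m^T *m invmx Sm.
set q := (v *m m) 0 0.
have hq : 0 < q by exact: q_pos.
have hq0 : q != 0 by rewrite gt_eqF.
set wS := q^-1 *: v.
have hwm : (wS *m m) 0 0 = 1 by rewrite -scalemxAl scal00 mulVf.
have hqw : qrow Sm wS = q^-1.
  rewrite qrowZ qrow_inv //; rewrite -/v -/q; field; exact: hq0.
have key : forall w, (w *m m) 0 0 = 1 -> qrow Sm w = q^-1 + qrow Sm (w - wS).
  move=> w hw; rewrite /wS qrow_shift // hw -/v -/q; field; exact: hq0.
have hlin : forall th1 th2, 0 < th2 ->
    linest (fromb wS) (Xstar X th1 th2) = (fun t => th2 * zs wS t).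
  by move=> th1 th2 h2; apply/funext => t; exact: lin_fromb.
have hV2 : forall th1 th2, 0 < th2 ->
    Var P (linest (fromb wS) (Xstar X th1 th2)) = th2 ^+ 2 * q^-1.
  by move=> th1 th2 h2; rewrite hlin // Var_zs hqw.
have hunb : unbiased_theta2 P X (fromb wS).
  by move=> th1 th2 h2; rewrite hlin // Ex_scale ?Ex_zs ?hwm ?mulr1 //; exact: intg_zs.
exists (fromb wS); split; [|split; [|split]].
- move=> th1 th2 t h2; rewrite lin_fromb // zs_mx spac_star //.
  rewrite /wS -scalemxAl scal00 -scalemxAr scal00 -/v; ring.
- split => // c' hu' th1 th2 h2.
  have [hs' hm'] := unbiasedP _ hu'.
  rewrite hV2 // Var_lin // (key _ hm') mulrDr lerDl.
  by apply: mulr_ge0; [exact: sqr_ge0| exact: qrow_ge0].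
- by move=> th1 th2 h2; rewrite hV2.
- move=> c [hu' hmin] th1 th2 h2.
  have [hs' hm'] := unbiasedP _ hu'.
  have := hmin _ hunb th1 th2 h2.
  rewrite hV2 // Var_lin // (key _ hm') mulrDr gerDl => hle.
  have h22 : 0 < th2 ^+ 2 by rewrite exprn_gt0.
  have hQ : qrow Sm (tb c - wS) <= 0.
    by rewrite -(pmulr_rle0 _ h22).
  have /eqP := qrow0 _ _ hS hQ; rewrite subr_eq0 => /eqP htb.
  apply: null_set => t; rewrite lin_tb // lin_fromb // htb //.
Qed.

Lemma main_blie : posdef Dm ->
  exists c2 : 'I_n.+1 -> R,
     (forall th1 th2 t, 0 < th2 ->
        linest c2 (Xstar X th1 th2) t = qf m (invmx Dm) (spacings (Xstar X th1 th2) t))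
     /\ is_BLIE_theta2 P X c2
     /\ (forall th1 th2, 0 < th2 ->
           MSE_theta2 P X c2 th1 th2 = (1 - qf m (invmx Dm) m) * th2 ^+ 2)
     /\ (forall c, is_BLIE_theta2 P X c -> forall th1 th2, 0 < th2 ->
           P [set t | linest c (Xstar X th1 th2) t != linest c2 (Xstar X th1 th2) t]
           = 0%E).
Proof.
move=> hD.
have hsym := D_sym; have hu := posdef_unit hD.
rewrite /qf.
set v := m^T *m invmx Dm.
set q := (v *m m) 0 0.
have key : forall w, qrow Dm w - 2 * (w *m m) 0 0 = qrow Dm (w - v) - q.
  move=> w; have := qrow_shift Dm m w 1 hsym hu; rewrite scale1r -/v -/q => ->.
  rewrite expr1n mulr1 mul1r; ring.
have hlin : forall th1 th2, 0 < th2 ->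
    linest (fromb v) (Xstar X th1 th2) = (fun t => th2 * zs v t).
  by move=> th1 th2 h2; apply/funext => t; exact: lin_fromb.
have hM2 : forall th1 th2, 0 < th2 ->
    MSE_theta2 P X (fromb v) th1 th2 = (1 - q) * th2 ^+ 2.
  move=> th1 th2 h2; rewrite /MSE_theta2 hlin // MSE_zs.
  have := key v; rewrite subrr.
  have -> : qrow Dm 0 = 0 by rewrite /qrow !mul0mx mxE.
  move=> ->; ring.
have hinv : invariant_theta2 (fromb v) by apply: invariant_of; exact: sum_fromb.
exists (fromb v); split; [|split; [|split]].
- by move=> th1 th2 t h2; rewrite lin_fromb // zs_mx spac_star // -scalemxAr scal00.
- split => // c' hi' th1 th2 h2.
  have hs' := invariantP _ hi'.
  rewrite hM2 // MSE_lin // key.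
  have := qrow_ge0 Dm (tb c' - v) hD.
  have := sqr_ge0 th2; nra.
- by move=> th1 th2 h2; rewrite hM2.
- move=> c [hi' hmin] th1 th2 h2.
  have hs' := invariantP _ hi'.
  have := hmin _ hinv th1 th2 h2.
  rewrite hM2 // MSE_lin // key => hle.
  have h22 : 0 < th2 ^+ 2 by rewrite exprn_gt0.
  have hQ : qrow Dm (tb c - v) <= 0 by nra.
  have /eqP := qrow0 _ _ hD hQ; rewrite subr_eq0 => /eqP htb.
  apply: null_set => t; rewrite lin_tb // lin_fromb // htb //.
Qed.

End Main.

Theorem proposition4p1 (d : measure_display) (T : measurableType d) (R : realType)
  (P : probability T R) (n : nat) (F : R -> R) (X : 'I_n.+1 -> T -> R) :
  (1 <= n)%N ->
  iid_sample_from P F X -> nondegenerate_df F ->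
  posdef (Smat P X) -> posdef (Dmat P X) ->
  let m := mvec P X in
  let S := Smat P X in
  let D := Dmat P X in
  (* BLUE *)
  (exists c2 : 'I_n.+1 -> R,
     (forall th1 th2 t, 0 < th2 ->
        linest c2 (Xstar X th1 th2) t =
        qf m (invmx S) (spacings (Xstar X th1 th2) t) / qf m (invmx S) m)
     /\ is_BLUE_theta2 P X c2
     /\ (forall th1 th2, 0 < th2 ->
           Var P (linest c2 (Xstar X th1 th2)) = th2 ^+ 2 / qf m (invmx S) m)
     /\ (forall c, is_BLUE_theta2 P X c -> forall th1 th2, 0 < th2 ->
           P [set t | linest c (Xstar X th1 th2) t != linest c2 (Xstar X th1 th2) t]
           = 0%E))
  /\
  (* BLIE *)
  (exists c2 : 'I_n.+1 -> R,
     (forall th1 th2 t, 0 < th2 ->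
        linest c2 (Xstar X th1 th2) t = qf m (invmx D) (spacings (Xstar X th1 th2) t))
     /\ is_BLIE_theta2 P X c2
     /\ (forall th1 th2, 0 < th2 ->
           MSE_theta2 P X c2 th1 th2 = (1 - qf m (invmx D) m) * th2 ^+ 2)
     /\ (forall c, is_BLIE_theta2 P X c -> forall th1 th2, 0 < th2 ->
           P [set t | linest c (Xstar X th1 th2) t != linest c2 (Xstar X th1 th2) t]
           = 0%E)).

Proof.
move=> hn [mX _ _ iX] _ hS hD.
split.
- exact: (main_blue P n X mX iX hn hS).
- exact: (main_blie P n X mX iX hD).
Qed.
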